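(* In the setting of the blurring mean-shift iteration with $f$ PDD and fixed positive weights, let $r_M=\max_{i,j}\|x_i-x_j\|$ and write $f(u)=\varphi(\|u\|)$. If $\varphi(r_M)>0$, then there exists $c\in\mathbb{R}^p$ such that $\lim_{t\to\infty}x_i^{(t)}=c$ for all $i=1,\dots,N$.
   Context: Setting: $x_1,\dots,x_N\in\mathbb{R}^p$, fixed weights $w_1,\dots,w_N>0$, and $f:\mathbb{R}^p\to[0,1]$ PDD, meaning: $f(u)=1$ iff $u=0$; $f(u)=\varphi(\|u\|)$ for some $\varphi:[0,\infty)\to[0,1]$; $\varphi$ is decreasing (non-increasing). The blurring mean-shift iteration is $x_i^{(0)}=x_i$ and $x_i^{(t+1)}=\frac{\sum_{j=1}^N f(x_i^{(t)}-x_j^{(t)})w_jx_j^{(t)}}{\sum_{j=1}^N f(x_i^{(t)}-x_j^{(t)})w_j}$. *)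

(* Defs.v *)
From Stdlib Require Import Reals.
Open Scope R_scope.

(* A point of R^p is represented by a function [nat -> R]; only the
   coordinates [k < p] are meaningful. *)
Definition vec := nat -> R.

Fixpoint sumN (n : nat) (g : nat -> R) : R :=
  match n with
  | O => 0
  | S m => sumN m g + g m
  end.

Fixpoint maxN (n : nat) (g : nat -> R) : R :=
  match n with
  | O => 0
  | S m => Rmax (maxN m g) (g m)
  end.

Definition vsub (u v : vec) : vec := fun k => u k - v k.

Definition norm (p : nat) (u : vec) : R := sqrt (sumN p (fun k => u k ^ 2)).

Definition PDD (p : nat) (phi : R -> R) : Prop :=
  (forall a, 0 <= a -> 0 <= phi a <= 1) /\
  (forall a b, 0 <= a -> a <= b -> phi b <= phi a) /\
  (forall u : vec, phi (norm p u) = 1 <-> (forall k, (k < p)%nat -> u k = 0)).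

Definition kernel (p : nat) (phi : R -> R) (u : vec) : R := phi (norm p u).

Fixpoint bms (p N : nat) (w : nat -> R) (phi : R -> R) (x : nat -> vec)
    (t : nat) : nat -> vec :=
  match t with
  | O => x
  | S t' =>
      let y := bms p N w phi x t' in
      fun i k =>
        sumN N (fun j => kernel p phi (vsub (y i) (y j)) * w j * y j k) /
        sumN N (fun j => kernel p phi (vsub (y i) (y j)) * w j)
  end.

Definition rM (p N : nat) (x : nat -> vec) : R :=
  maxN N (fun i => maxN N (fun j => norm p (vsub (x i) (x j)))).

(* Main.v *)
Require Import Defs.
From Stdlib Require Import Reals.
Open Scope R_scope.
From Stdlib Require Import Lra Lia.

Lemma sumN_ext n f g : (forall j, (j < n)%nat -> f j = g j) -> sumN n f = sumN n g.
Proof. induction n; simpl; intros H; [reflexivity|]. rewrite IHn by (intros; apply H; lia). rewrite H by lia. reflexivity. Qed.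

Lemma sumN_mult n c g : sumN n (fun j => c * g j) = c * sumN n g.
Proof. induction n; simpl; [ring|]. rewrite IHn; ring. Qed.

Lemma sumN_plus n f g : sumN n (fun j => f j + g j) = sumN n f + sumN n g.
Proof. induction n; simpl; [ring|]. rewrite IHn; ring. Qed.

Lemma sumN_minus n f g : sumN n (fun j => f j - g j) = sumN n f - sumN n g.
Proof. induction n; simpl; [ring|]. rewrite IHn; ring. Qed.

Lemma sumN_le n f g : (forall j, (j < n)%nat -> f j <= g j) -> sumN n f <= sumN n g.
Proof. induction n; simpl; intros H; [lra|]. assert (f n <= g n) by (apply H; lia).
  assert (sumN n f <= sumN n g) by (apply IHn; intros; apply H; lia). lra. Qed.

Lemma sumN_nonneg n g : (forall j, (j < n)%nat -> 0 <= g j) -> 0 <= sumN n g.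
Proof. intros H. replace 0 with (sumN n (fun _ => 0)). apply sumN_le; auto.
  clear H; induction n; simpl; [auto| rewrite IHn; ring]. Qed.

Lemma sumN_le_term n g j : (forall j, (j < n)%nat -> g j <= 0) -> (j < n)%nat -> sumN n g <= g j.
Proof. induction n; simpl; intros H Hj; [lia|].
  destruct (Nat.eq_dec j n) as [->|Hne].
  - assert (sumN n g <= 0). { replace 0 with (sumN n (fun _ => 0)). apply sumN_le; intros; apply H; lia.
      clear; induction n; simpl; [auto| rewrite IHn; ring]. } lra.
  - assert (g n <= 0) by (apply H; lia). assert (sumN n g <= g j) by (apply IHn; [intros; apply H|]; lia). lra. Qed.

Lemma sumN_ge_term n g j : (forall j, (j < n)%nat -> 0 <= g j) -> (j < n)%nat -> g j <= sumN n g.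
Proof. intros H Hj. assert (sumN n (fun i => - g i) <= - g j).
  { apply (sumN_le_term n (fun i => - g i)); auto. intros; specialize (H j0 H0); lra. }
  replace (sumN n (fun i => - g i)) with (-1 * sumN n g) in H0. lra.
  rewrite <- sumN_mult. apply sumN_ext; intros; ring. Qed.

Lemma sumN_const n c : sumN n (fun _ => c) = INR n * c.
Proof. induction n; simpl sumN; [simpl; ring|]. rewrite IHn, S_INR; ring. Qed.

Lemma sumN_swap n m f : sumN n (fun j => sumN m (fun l => f j l)) = sumN m (fun l => sumN n (fun j => f j l)).
Proof. induction n; simpl.
  - clear; induction m; simpl; [auto| rewrite <- IHm; ring].
  - rewrite IHn, <- sumN_plus. reflexivity. Qed.

Lemma jensen n (a z : nat -> R) : (forall j, (j < n)%nat -> 0 <= a j) -> sumN n a = 1 ->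
  (sumN n (fun j => a j * z j)) ^ 2 <= sumN n (fun j => a j * z j ^ 2).
Proof. intros Ha H1.
  assert (E : forall s, sumN n (fun j => a j * (z j - s) ^ 2) =
    sumN n (fun j => a j * z j ^ 2) + (-2 * s) * sumN n (fun j => a j * z j) + s^2 * sumN n a).
  { intros s. rewrite <- !sumN_mult, <- !sumN_plus. apply sumN_ext; intros; ring. }
  set (s := sumN n (fun j => a j * z j)).
  assert (0 <= sumN n (fun j => a j * (z j - s) ^ 2)).
  { apply sumN_nonneg; intros. apply Rmult_le_pos; [apply Ha; auto| apply pow2_ge_0]. }
  rewrite E, H1 in H. fold s in H. lra. Qed.

Lemma conv_dist p n (y : nat -> vec) (a b : nat -> R) D2 :
  (forall j, (j < n)%nat -> 0 <= a j) -> sumN n a = 1 ->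
  (forall j, (j < n)%nat -> 0 <= b j) -> sumN n b = 1 ->
  (forall j l, (j < n)%nat -> (l < n)%nat -> sumN p (fun k => (y j k - y l k) ^ 2) <= D2) ->
  sumN p (fun k => (sumN n (fun j => a j * y j k) - sumN n (fun l => b l * y l k)) ^ 2) <= D2.
Proof. intros Ha Sa Hb Sb HD.
  assert (Ek : forall k, sumN n (fun j => a j * y j k) - sumN n (fun l => b l * y l k) =
     sumN n (fun j => a j * sumN n (fun l => b l * (y j k - y l k)))).
  { intros k. transitivity (sumN n (fun j => a j * (y j k - sumN n (fun l => b l * y l k)))).
    - rewrite (sumN_ext n (fun j => a j * (y j k - sumN n (fun l => b l * y l k)))
         (fun j => a j * y j k - sumN n (fun l => b l * y l k) * a j)) by (intros; ring).
      rewrite sumN_minus, sumN_mult, Sa. ring.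
    - apply sumN_ext; intros j Hj. f_equal.
      rewrite (sumN_ext n (fun l => b l * (y j k - y l k)) (fun l => y j k * b l - b l * y l k)) by (intros; ring).
      rewrite sumN_minus, sumN_mult, Sb. ring. }
  apply Rle_trans with (sumN p (fun k => sumN n (fun j => a j * sumN n (fun l => b l * (y j k - y l k) ^ 2)))).
  { apply sumN_le; intros k Hk. rewrite Ek.
    eapply Rle_trans. apply jensen; auto.
    apply sumN_le; intros j Hj. apply Rmult_le_compat_l; auto. apply jensen; auto. }
  rewrite sumN_swap.
  apply Rle_trans with (sumN n (fun j => a j * sumN n (fun l => b l * D2))).
  { apply sumN_le; intros j Hj.
    replace (sumN p (fun k => a j * sumN n (fun l => b l * (y j k - y l k) ^ 2)))
      with (a j * sumN p (fun k => sumN n (fun l => b l * (y j k - y l k) ^ 2)))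
      by (rewrite <- sumN_mult; reflexivity).
    apply Rmult_le_compat_l; auto.
    rewrite sumN_swap. apply sumN_le; intros l Hl. rewrite sumN_mult.
    apply Rmult_le_compat_l; auto. }
  rewrite (sumN_ext n (fun j => a j * sumN n (fun l => b l * D2)) (fun j => D2 * a j)).
  rewrite sumN_mult, Sa; lra.
  intros j Hj. rewrite (sumN_ext n (fun l => b l * D2) (fun l => D2 * b l)) by (intros; ring).
  rewrite sumN_mult, Sb; ring.
Qed.

Fixpoint mx (n : nat) (g : nat -> R) : R :=
  match n with O => g O | S m => Rmax (mx m g) (g (S m)) end.
Fixpoint mn (n : nat) (g : nat -> R) : R :=
  match n with O => g O | S m => Rmin (mn m g) (g (S m)) end.

Lemma mx_ge n g j : (j < S n)%nat -> g j <= mx n g.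
Proof. induction n; simpl; intros H.
  - replace j with O by lia; lra.
  - destruct (Nat.eq_dec j (S n)) as [->|]; [apply Rmax_r|].
    eapply Rle_trans; [apply IHn; lia| apply Rmax_l]. Qed.
Lemma mn_le n g j : (j < S n)%nat -> mn n g <= g j.
Proof. induction n; simpl; intros H.
  - replace j with O by lia; lra.
  - destruct (Nat.eq_dec j (S n)) as [->|]; [apply Rmin_r|].
    eapply Rle_trans; [apply Rmin_l| apply IHn; lia]. Qed.
Lemma mx_att n g : exists j, (j < S n)%nat /\ mx n g = g j.
Proof. induction n; simpl. exists O; split; [lia|auto].
  destruct IHn as [j [Hj E]]. unfold Rmax. destruct (Rle_dec (mx n g) (g (S n))).
  exists (S n); split; [lia|auto]. exists j; split; [lia|auto]. Qed.
Lemma mn_att n g : exists j, (j < S n)%nat /\ mn n g = g j.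
Proof. induction n; simpl. exists O; split; [lia|auto].
  destruct IHn as [j [Hj E]]. unfold Rmin. destruct (Rle_dec (mn n g) (g (S n))).
  exists j; split; [lia|auto]. exists (S n); split; [lia|auto]. Qed.

Lemma contract n (z z' : nat -> R) d : 0 <= d ->
  (forall i, (i < S n)%nat -> exists a : nat -> R, (forall j, (j < S n)%nat -> d <= a j) /\
     sumN (S n) a = 1 /\ z' i = sumN (S n) (fun j => a j * z j)) ->
  mn n z <= mn n z' /\ mx n z' <= mx n z /\ mx n z' - mn n z' <= (1 - d) * (mx n z - mn n z).
Proof. intros Hd H.
  set (M := mx n z). set (m := mn n z).
  assert (HmM : m <= M) by (apply Rle_trans with (z O); [apply mn_le|apply mx_ge]; lia).
  assert (B : forall i, (i < S n)%nat -> m <= z' i <= M - d * (M - m)).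
  { intros i Hi. destruct (H i Hi) as [a [Ha [Sa E]]]. rewrite E. split.
    - assert (0 <= sumN (S n) (fun j => a j * (z j - m))).
      { apply sumN_nonneg; intros. apply Rmult_le_pos. specialize (Ha j H0); lra.
        assert (m <= z j) by (apply mn_le; auto). lra. }
      rewrite (sumN_ext _ _ (fun j => a j * z j - m * a j)) in H0 by (intros; ring).
      rewrite sumN_minus, sumN_mult, Sa in H0. lra.
    - destruct (mn_att n z) as [j0 [Hj0 Ej0]].
      assert (sumN (S n) (fun j => a j * (z j - M)) <= a j0 * (z j0 - M)).
      { apply (sumN_le_term (S n) (fun j => a j * (z j - M))); auto.
        intros. assert (z j <= M) by (apply mx_ge; auto). specialize (Ha j H0).
        nra. }
      rewrite (sumN_ext _ _ (fun j => a j * z j - M * a j)) in H0 by (intros; ring).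
      rewrite sumN_minus, sumN_mult, Sa in H0. fold m in Ej0. rewrite <- Ej0 in H0.
      specialize (Ha j0 Hj0). assert (d * (m - M) >= a j0 * (m - M)) by nra. lra. }
  destruct (mx_att n z') as [i0 [Hi0 E0]]. destruct (mn_att n z') as [i1 [Hi1 E1]].
  rewrite E0, E1. specialize (B i0 Hi0) as B0. specialize (B i1 Hi1) as B1.
  split; [lra|]. split; [nra|]. nra.
Qed.

Lemma sq_bound x q : -q <= x <= q -> x ^ 2 <= q * q.
Proof. intros; nra. Qed.

Lemma converge p n (Y : nat -> nat -> vec) d : 0 < d -> d <= 1 ->
  (forall t i, (i < S n)%nat -> exists a : nat -> R, (forall j, (j < S n)%nat -> d <= a j) /\
     sumN (S n) a = 1 /\ forall k, Y (S t) i k = sumN (S n) (fun j => a j * Y t j k)) ->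
  exists c : vec, forall i, (i < S n)%nat ->
    Un_cv (fun t => norm p (vsub (Y t i) c)) 0.
Proof. intros Hd0 Hd1 H.
  set (M := fun t k => mx n (fun i => Y t i k)).
  set (m := fun t k => mn n (fun i => Y t i k)).
  assert (C : forall t k, m t k <= m (S t) k /\ M (S t) k <= M t k /\
             M (S t) k - m (S t) k <= (1 - d) * (M t k - m t k)).
  { intros t k. apply (contract n (fun i => Y t i k) (fun i => Y (S t) i k) d); [lra|]. intros i Hi. destruct (H t i Hi) as [a [Ha [Sa E]]].
    exists a; split; [auto|split; auto]. }
  assert (mM : forall t k, m t k <= M t k).
  { intros; apply Rle_trans with (Y t O k); [apply (mn_le n (fun i => Y t i k) O)|apply (mx_ge n (fun i => Y t i k) O)]; lia. }
  assert (Dif : forall t k, M t k - m t k <= (1 - d) ^ t * (M O k - m O k)).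
  { induction t; intros k; simpl; [lra|]. destruct (C t k) as [_ [_ C3]].
    specialize (IHt k). apply Rle_trans with ((1-d) * (M t k - m t k)); auto.
    rewrite Rmult_assoc. apply Rmult_le_compat_l; lra. }
  assert (Mdec : forall t s k, (t <= s)%nat -> M s k <= M t k).
  { intros t s k Hts. induction Hts; [lra|]. destruct (C m0 k) as [_ [C2 _]]. lra. }
  assert (Gr : forall k, Un_growing (fun t => m t k)).
  { intros k t. apply (C t k). }
  assert (Ub : forall k, has_ub (fun t => m t k)).
  { intros k. exists (M O k). intros x [t ->]. apply Rle_trans with (M t k); auto.
    apply Mdec; lia. }
  exists (fun k => proj1_sig (growing_cv _ (Gr k) (Ub k))).
  intros i Hi.
  assert (Bc : forall t k, Rabs (Y t i k - proj1_sig (growing_cv _ (Gr k) (Ub k))) <= (1 - d) ^ t * (M O k - m O k)).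
  { intros t k. destruct (growing_cv _ (Gr k) (Ub k)) as [c Hc]; simpl.
    assert (c1 : m t k <= c) by (apply (growing_ineq (fun t => m t k)); auto).
    assert (c2 : c <= M t k).
    { destruct (Rle_dec c (M t k)) as [|Hn]; auto. exfalso.
      destruct (Hc (c - M t k)) as [N0 HN0]; [lra|].
      specialize (HN0 (Nat.max N0 t) ltac:(lia)). unfold R_dist in HN0.
      assert (M (Nat.max N0 t) k <= M t k) by (apply Mdec; lia).
      specialize (mM (Nat.max N0 t) k). apply Rabs_def2 in HN0. lra. }
    assert (y1 : m t k <= Y t i k) by (apply (mn_le n (fun i => Y t i k)); auto).
    assert (y2 : Y t i k <= M t k) by (apply (mx_ge n (fun i => Y t i k)); auto).
    specialize (Dif t k). apply Rabs_le. lra. }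
  set (B := sumN p (fun k => M O k - m O k)).
  assert (HB : forall k, (k < p)%nat -> M O k - m O k <= B).
  { intros k Hk. apply (sumN_ge_term p (fun k => M O k - m O k)); auto.
    intros; specialize (mM O j); lra. }
  assert (B0 : 0 <= B) by (apply sumN_nonneg; intros; specialize (mM O j); lra).
  assert (Nb : forall t, norm p (vsub (Y t i) (fun k => proj1_sig (growing_cv _ (Gr k) (Ub k))))
                 <= sqrt (INR p) * ((1 - d) ^ t * B)).
  { intros t. assert (q0 : 0 <= (1 - d) ^ t) by (apply pow_le; lra).
    unfold norm. rewrite <- (sqrt_square ((1 - d) ^ t * B)) by nra.
    rewrite <- sqrt_mult_alt by apply pos_INR. apply sqrt_le_1_alt.
    rewrite <- sumN_const. apply sumN_le; intros k Hk. unfold vsub.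
    specialize (Bc t k). specialize (HB k Hk). specialize (mM O k).
    assert (E : (1 - d) ^ t * (M O k - m O k) <= (1 - d) ^ t * B) by (apply Rmult_le_compat_l; auto).
    unfold Rabs in Bc; destruct Rcase_abs in Bc.
    all: match goal with |- (?x)^2 <= ?q * _ => apply (sq_bound x q); lra end. }
  intros eps Heps.
  set (Cc := sqrt (INR p) * B + 1).
  assert (Cc0 : 0 < Cc) by (unfold Cc; assert (0 <= sqrt (INR p)) by apply sqrt_pos; nra).
  destruct (pow_lt_1_zero (1 - d) ltac:(rewrite Rabs_pos_eq; lra) (eps / Cc)) as [N0 HN0].
  { apply Rdiv_lt_0_compat; lra. }
  exists N0. intros t Ht. specialize (HN0 t Ht). specialize (Nb t). unfold R_dist.
  rewrite Rminus_0_r. rewrite Rabs_pos_eq by (unfold norm; apply sqrt_pos).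
  assert (q0 : 0 <= (1 - d) ^ t) by (apply pow_le; lra).
  rewrite Rabs_pos_eq in HN0 by auto.
  assert (sq : 0 <= sqrt (INR p)) by apply sqrt_pos.
  assert ((1 - d) ^ t * Cc < eps).
  { apply Rmult_lt_compat_r with (r := Cc) in HN0; auto. unfold Rdiv in HN0.
    rewrite Rmult_assoc, Rinv_l in HN0 by lra. lra. }
  unfold Cc in H0. nra.
Qed.

Lemma maxN_ge n g j : (j < n)%nat -> g j <= Defs.maxN n g.
Proof. induction n; simpl; intros H; [lia|].
  destruct (Nat.eq_dec j n) as [->|]; [apply Rmax_r|].
  eapply Rle_trans; [apply IHn; lia| apply Rmax_l]. Qed.
Lemma maxN_nonneg n g : 0 <= Defs.maxN n g.
Proof. induction n; simpl; [lra|]. eapply Rle_trans; [exact IHn| apply Rmax_l]. Qed.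

Lemma sumsq_nonneg p (u : vec) : 0 <= sumN p (fun k => u k ^ 2).
Proof. apply sumN_nonneg; intros; apply pow2_ge_0. Qed.

Lemma sumsq_le_of_norm p u r : norm p u <= r -> sumN p (fun k => u k ^ 2) <= r ^ 2.
Proof. intros H. unfold norm in H. pose proof (sqrt_pos (sumN p (fun k => u k ^ 2))).
  rewrite <- (sqrt_sqrt (sumN p (fun k => u k ^ 2))) by apply sumsq_nonneg. nra. Qed.

Lemma norm_le_of p u r : 0 <= r -> sumN p (fun k => u k ^ 2) <= r ^ 2 -> norm p u <= r.
Proof. intros Hr H. unfold norm. rewrite <- (sqrt_square r Hr). apply sqrt_le_1_alt. lra. Qed.

Lemma bms_S p N w phi x t i k : bms p N w phi x (S t) i k =
  sumN N (fun j => kernel p phi (vsub (bms p N w phi x t i) (bms p N w phi x t j)) * w j * bms p N w phi x t j k) /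
  sumN N (fun j => kernel p phi (vsub (bms p N w phi x t i) (bms p N w phi x t j)) * w j).
Proof. reflexivity. Qed.

Theorem corollary1 (p N : nat) (x : nat -> vec) (w : nat -> R) (phi : R -> R)
    (hw : forall j, (j < N)%nat -> 0 < w j)
    (hf : PDD p phi)
    (hpos : 0 < phi (rM p N x)) :
  exists c : vec,
    forall i, (i < N)%nat ->
      Un_cv (fun t => norm p (vsub (bms p N w phi x t i) c)) 0.
Proof.
  destruct N as [|n].
  { exists (fun _ => 0). intros; lia. }
  destruct hf as [Hrange [Hmono _]].
  set (y := bms p (S n) w phi x).
  set (r := rM p (S n) x).
  set (f0 := phi r).
  assert (f0pos : 0 < f0) by exact hpos.
  assert (r0 : 0 <= r) by apply maxN_nonneg.
  set (wm := mn n w).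
  assert (wm0 : 0 < wm) by (destruct (mn_att n w) as [j [Hj E]]; unfold wm; rewrite E; auto).
  assert (wmle : forall j, (j < S n)%nat -> wm <= w j) by (intros; apply mn_le; auto).
  set (W := sumN (S n) w).
  assert (W0 : 0 < W).
  { apply Rlt_le_trans with (w O); [apply hw; lia|].
    apply (sumN_ge_term (S n) w O); [intros; apply Rlt_le, hw|]; lia. }
  set (d := Rmin 1 (f0 * wm / W)).
  assert (d0 : 0 < d).
  { unfold d. apply Rmin_glb_lt; [lra|]. apply Rdiv_lt_0_compat; [apply Rmult_lt_0_compat|]; auto. }
  assert (d1 : d <= 1) by apply Rmin_l.
  set (Inv := fun t => forall j l, (j < S n)%nat -> (l < S n)%nat ->
                sumN p (fun k => (y t j k - y t l k) ^ 2) <= r ^ 2).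
  assert (Step : forall t, Inv t -> forall i, (i < S n)%nat -> exists a : nat -> R,
            (forall j, (j < S n)%nat -> d <= a j) /\ sumN (S n) a = 1 /\
            forall k, y (S t) i k = sumN (S n) (fun j => a j * y t j k)).
  { intros t HI i Hi.
    set (K := fun j => kernel p phi (vsub (y t i) (y t j))).
    assert (HK : forall j, (j < S n)%nat -> f0 <= K j <= 1).
    { intros j Hj. unfold K, kernel.
      assert (nn : 0 <= norm p (vsub (y t i) (y t j))) by apply sqrt_pos.
      assert (nl : norm p (vsub (y t i) (y t j)) <= r) by (apply norm_le_of; auto; apply HI; auto).
      split; [apply Hmono; auto| apply Hrange; auto]. }
    set (Sm := sumN (S n) (fun j => K j * w j)).
    assert (Sm0 : 0 < Sm).
    { apply Rlt_le_trans with (K O * w O).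
      - specialize (HK O ltac:(lia)). specialize (hw O ltac:(lia)). apply Rmult_lt_0_compat; lra.
      - apply (sumN_ge_term (S n) (fun j => K j * w j) O); [|lia].
        intros j Hj. specialize (HK j Hj). specialize (hw j Hj). nra. }
    assert (SmW : Sm <= W).
    { apply sumN_le; intros j Hj. specialize (HK j Hj). specialize (hw j Hj). nra. }
    exists (fun j => K j * w j / Sm). split; [|split].
    - intros j Hj. apply Rle_trans with (f0 * wm / W); [apply Rmin_r|].
      specialize (HK j Hj). specialize (wmle j Hj). unfold Rdiv.
      apply Rmult_le_compat.
      + apply Rmult_le_pos; lra.
      + apply Rlt_le, Rinv_0_lt_compat; lra.
      + apply Rmult_le_compat; lra.
      + apply Rinv_le_contravar; lra.
    - rewrite (sumN_ext _ _ (fun j => / Sm * (K j * w j))) by (intros; unfold Rdiv; ring).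
      rewrite sumN_mult. fold Sm. field. lra.
    - intros k. unfold y at 1. rewrite bms_S. fold y.
      change (sumN (S n) (fun j => K j * w j * y t j k) / Sm = sumN (S n) (fun j => K j * w j / Sm * y t j k)).
      rewrite (sumN_ext _ (fun j => K j * w j / Sm * y t j k) (fun j => / Sm * (K j * w j * y t j k)))
        by (intros; unfold Rdiv; ring).
      rewrite sumN_mult. unfold Rdiv; ring. }
  assert (AllInv : forall t, Inv t).
  { induction t.
    - intros j l Hj Hl. change (sumN p (fun k => vsub (x j) (x l) k ^ 2) <= r ^ 2).
      apply sumsq_le_of_norm. unfold r, rM.
      eapply Rle_trans; [| apply (maxN_ge (S n) _ j Hj)].
      apply (maxN_ge (S n) (fun l => norm p (vsub (x j) (x l))) l Hl).
    - intros j l Hj Hl.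
      destruct (Step t IHt j Hj) as [a [Ha [Sa Ea]]].
      destruct (Step t IHt l Hl) as [b [Hb [Sb Eb]]].
      rewrite (sumN_ext p _ (fun k => (sumN (S n) (fun j => a j * y t j k) - sumN (S n) (fun l => b l * y t l k)) ^ 2))
        by (intros; rewrite Ea, Eb; reflexivity).
      apply conv_dist; auto.
      + intros; specialize (Ha j0 H); lra.
      + intros; specialize (Hb j0 H); lra. }
  destruct (converge p n y d d0 d1 (fun t => Step t (AllInv t))) as [c Hc].
  exists c. exact Hc.
Qed.
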